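(* Fix $p\in(\tfrac12,1)$. For each $n$ and $B\in\{1,\dots,n\}$ let $\theta(B,n)$ be the correctness index of the crowdfunding game $\Gamma(B,n)$ (defined in the context). Then $$\lim_{n\to\infty}\ \max_{B\in\{1,\dots,n\}}\theta(B,n)=\frac{3p-1}{2p}\ (<1).$$
   Context: The crowdfunding game $\Gamma(B,n)$ with parameter $p\in(\tfrac12,1)$: there are $n$ players and a threshold $B\in\{1,\dots,n\}$. A state $\omega\in\{H,L\}$ is drawn with probability $\tfrac12$ each. Conditional on $\omega$, each player $i$ independently receives a signal $s_i\in\{H,L\}$ with $\Pr(s_i=\omega\mid\omega)=p$. Players simultaneously choose $a_i\in\{0,1\}$. Player $i$'s payoff is $1$ if $a_i=1$, $\sum_j a_j\ge B$ and $\omega=H$; $-1$ if $a_i=1$, $\sum_j a_j\ge B$ and $\omega=L$; and $0$ otherwise. A strategy is a map $\sigma_i:\{H,L\}\to[0,1]$ giving the probability of action $1$ after each signal; Bayes-Nash equilibrium is defined as usual. A profile is non-trivial if $\Pr_\sigma(\sum_i a_i\ge B)>0$, and symmetric if all players use the same strategy. It is known that each $\Gamma(B,n)$ has a unique symmetric non-trivial Bayes-Nash equilibrium $\sigma$. The correctness index is $\theta(B,n)=\tfrac12\Pr_\sigma(\sum_{i}a_i\ge B\mid\omega=H)+\tfrac12\Pr_\sigma(\sum_i a_i<B\mid\omega=L)$, computed under this unique equilibrium $\sigma$. *)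

(* Defs.v *)
From HB Require Import structures.
From mathcomp Require Import all_boot all_order all_algebra.
From mathcomp Require Import all_classical all_reals all_analysis.
From Stdlib Require Import ClassicalEpsilon.

Set Implicit Arguments.
Unset Strict Implicit.
Unset Printing Implicit Defensive.

Import Order.TTheory GRing.Theory Num.Theory.
Local Open Scope ring_scope.

(* Conventions: states and signals are booleans, true = H, false = L.
   Actions are booleans, true = action 1 (contribute).
   A strategy is a map bool -> R (probability of action 1 after each signal). *)

Section Crowdfunding.
Variables (R : realType) (p : R) (B n : nat).

Definition strategy_ok (tau : bool -> R) : Prop :=
  forall s : bool, 0 <= tau s <= 1.

Definition profile := 'I_n -> bool -> R.

Definition profile_ok (sigma : profile) : Prop :=
  forall i, strategy_ok (sigma i).

Definition sig_prob (omega s : bool) : R := if s == omega then p else 1 - p.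

Definition act_prob (q : R) (a : bool) : R := if a then q else 1 - q.

Definition weight (sigma : profile) (omega : bool)
    (s a : {ffun 'I_n -> bool}) : R :=
  (1 / 2) * (\prod_i sig_prob omega (s i))
          * (\prod_i act_prob (sigma i (s i)) (a i)).

Definition funded (a : {ffun 'I_n -> bool}) : bool :=
  (B <= \sum_i (a i : nat))%N.

Definition payoff (i : 'I_n) (omega : bool) (a : {ffun 'I_n -> bool}) : R :=
  if a i && funded a then (if omega then 1 else -1) else 0.

Definition expect (sigma : profile)
    (f : bool -> {ffun 'I_n -> bool} -> {ffun 'I_n -> bool} -> R) : R :=
  \sum_(omega : bool) \sum_(s : {ffun 'I_n -> bool})
     \sum_(a : {ffun 'I_n -> bool}) weight sigma omega s a * f omega s a.

Definition exp_payoff (sigma : profile) (i : 'I_n) : R :=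
  expect sigma (fun omega _ a => payoff i omega a).

Definition deviate (sigma : profile) (i : 'I_n) (tau : bool -> R) : profile :=
  fun j => if j == i then tau else sigma j.

Definition is_BNE (sigma : profile) : Prop :=
  profile_ok sigma /\
  forall (i : 'I_n) (tau : bool -> R), strategy_ok tau ->
    exp_payoff (deviate sigma i tau) i <= exp_payoff sigma i.

Definition nontrivial (sigma : profile) : Prop :=
  0 < expect sigma (fun _ _ a => if funded a then 1 else 0).

Definition symmetric_profile (tau : bool -> R) : profile := fun _ => tau.

Definition is_sym_nontrivial_BNE (tau : bool -> R) : Prop :=
  is_BNE (symmetric_profile tau) /\ nontrivial (symmetric_profile tau).

(* theta under a given profile:
   1/2 Pr(funded | H) + 1/2 Pr(not funded | L)
   = Pr(omega = H and funded) + Pr(omega = L and not funded). *)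
Definition theta_of (sigma : profile) : R :=
  expect sigma (fun omega _ a =>
    if omega then (if funded a then 1 else 0)
    else (if funded a then 0 else 1)).

Definition inhabited_strategy : inhabited (bool -> R) := inhabits (fun _ => 0).

(* The (unique, by the known result) symmetric non-trivial BNE. *)
Definition the_equilibrium : bool -> R :=
  epsilon inhabited_strategy is_sym_nontrivial_BNE.

Definition theta : R := theta_of (symmetric_profile the_equilibrium).

End Crowdfunding.

(* max_{B in {1..n}} theta(B, n); equals 0 for n = 0 (irrelevant for the limit). *)
Definition max_theta (R : realType) (p : R) (n : nat) : R :=
  \big[Num.max/0]_(1 <= B < n.+1) theta p B n.

(* Main.v *)
Require Import Defs.
From HB Require Import structures.
From mathcomp Require Import all_boot all_order all_algebra.
From mathcomp Require Import all_classical all_reals all_analysis.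
From mathcomp Require Import ring lra zify.
From Stdlib Require Import ClassicalEpsilon.
Set Implicit Arguments. Unset Strict Implicit. Unset Printing Implicit Defensive.
Import Order.TTheory GRing.Theory Num.Theory numFieldNormedType.Exports.
Local Open Scope ring_scope.

Section Binom.
Variable R : realType.
Implicit Types (q z : R) (m k j : nat).

Definition bp q : {poly R} := q%:P * 'X + (1 - q)%:P.
Definition cb m q k : R := ((bp q) ^+ m)`_k.
Definition Tl m q k : R := \sum_(j < m.+1) ((k <= j)%N)%:R * cb m q j.

Lemma cb_rec m q k : cb m.+1 q k.+1 = (1 - q) * cb m q k.+1 + q * cb m q k.
Proof.
rewrite /cb exprS /bp mulrDl coefD -mulrA coefCM coefXM coefCM /=.
by rewrite addrC.
Qed.

Lemma cb_rec0 m q : cb m.+1 q 0 = (1 - q) * cb m q 0.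
Proof.
rewrite /cb exprS /bp mulrDl coefD -mulrA coefCM coefXM coefCM /=; ring.
Qed.

Lemma cb0 q k : cb 0 q k = (k == 0)%:R.
Proof. by rewrite /cb expr0 coef1. Qed.

Lemma cbE m q k : cb m q k = 'C(m, k)%:R * q ^+ k * (1 - q) ^+ (m - k).
Proof.
elim: m k => [|m IH] [|k].
- by rewrite cb0 bin0 !expr0 !mulr1.
- by rewrite cb0 bin0n !mul0r.
- by rewrite cb_rec0 IH !bin0 !expr0 !subn0 exprS; ring.
rewrite cb_rec !IH binS natrD subSS.
case: (ltnP k m) => hkm.
  have -> : (m - k = (m - k.+1).+1)%N by rewrite subnS prednK // subn_gt0.
  by rewrite !exprS; ring.
rewrite bin_small ?ltnS // (_ : (m - k.+1 = 0)%N); last by apply/eqP; rewrite subn_eq0 ltnW // ltnS.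
rewrite (_ : (m - k = 0)%N); last by apply/eqP; rewrite subn_eq0.
by rewrite !exprS; ring.
Qed.

Lemma cb_ge0 m q k : 0 <= q <= 1 -> 0 <= cb m q k.
Proof.
move=> /andP[q0 q1]; rewrite cbE; apply: mulr_ge0; last by apply: exprn_ge0; rewrite subr_ge0.
by apply: mulr_ge0 => //; apply: exprn_ge0.
Qed.

Lemma cb_big m q k : (m < k)%N -> cb m q k = 0.
Proof. by move=> h; rewrite cbE bin_small // !mul0r. Qed.

Lemma size_bp q : (size (bp q) <= 2)%N.
Proof. rewrite /bp size_MXaddC; case: ifP => // _; by rewrite size_polyC; case: (q != 0). Qed.

Lemma size_bpX m q : (size (bp q ^+ m) <= m.+1)%N.
Proof.
apply: leq_trans (size_poly_exp_leq _ _) _; rewrite ltnS.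
have := size_bp q; case: (size (bp q)) => [|[|[|]]] //= _; rewrite ?mul0n ?mul1n //.
Qed.

Lemma sum_cb m q z : \sum_(j < m.+1) cb m q j * z ^+ j = (q * z + (1 - q)) ^+ m.
Proof.
rewrite -(horner_coef_wide _ (size_bpX m q)) horner_exp /bp.
by rewrite hornerD hornerMX !hornerC.
Qed.

Lemma sum_cb1 m q : \sum_(j < m.+1) cb m q j = 1.
Proof.
have := sum_cb m q 1; rewrite (_ : q * 1 + (1 - q) = 1) ?expr1n; last by ring. move=> <-.
by apply: eq_bigr => j _; rewrite expr1n mulr1.
Qed.


Lemma sum_pred1 N (F : nat -> R) k :
  \sum_(j < N) ((k == j : bool)%:R) * F j = if (k < N)%N then F k else 0.
Proof.
elim: N => [|N IH]; first by rewrite big_ord0.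
rewrite big_ord_recr /= IH ltnS.
case: (ltngtP k N) => h /=.
- by rewrite mul0r addr0.
- by rewrite mul0r addr0.
- by rewrite h mul1r add0r.
Qed.

Lemma Tl_0 m q : Tl m q 0 = 1.
Proof. by rewrite /Tl -[RHS](sum_cb1 m q); apply: eq_bigr => j _; rewrite leq0n mul1r. Qed.

Lemma Tl_split m q k : Tl m q k = cb m q k + Tl m q k.+1.
Proof.
have -> : Tl m q k = \sum_(j < m.+1) ((k == j : bool)%:R * cb m q j + ((k.+1 <= j)%N)%:R * cb m q j).
  apply: eq_bigr => j _; rewrite -mulrDl; congr (_ * _).
  rewrite leq_eqVlt; case: (ltngtP k j) => //= _; rewrite ?addr0 ?add0r //.
rewrite big_split /= sum_pred1; congr (_ + _).
by case: ifP => // h; rewrite cb_big // ltnNge -ltnS h.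
Qed.

Lemma Tl_rec m q k : Tl m.+1 q k.+1 = q * Tl m q k + (1 - q) * Tl m q k.+1.
Proof.
have hS : Tl m q k.+1 = \sum_(i < m.+1) ((k <= i)%N)%:R * cb m q i.+1.
  have : \sum_(i < m.+2) ((k.+1 <= i)%N)%:R * cb m q i = Tl m q k.+1.
    by rewrite big_ord_recr /= cb_big // mulr0 addr0.
  by move=> <-; rewrite big_ord_recl /= mul0r add0r.
rewrite hS /Tl big_ord_recl /= mul0r add0r mulr_sumr mulr_sumr -big_split /=.
apply: eq_bigr => i _; rewrite /bump /= add1n ltnS cb_rec; ring.
Qed.

Lemma Tl_step m q k : Tl m.+1 q k.+1 = Tl m q k - (1 - q) * cb m q k.
Proof. by rewrite Tl_rec (Tl_split m q k); ring. Qed.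

Lemma Tl_ge0 m q k : 0 <= q <= 1 -> 0 <= Tl m q k.
Proof.
move=> hq; apply: sumr_ge0 => j _; apply: mulr_ge0; first by rewrite ler0n.
exact: cb_ge0.
Qed.

Lemma Tl_le1 m q k : 0 <= q <= 1 -> Tl m q k <= 1.
Proof.
move=> hq; rewrite -(sum_cb1 m q); apply: ler_sum => j _.
have := cb_ge0 m j hq; case: (k <= j)%N => /= h; rewrite ?mul1r ?mul0r //.
Qed.

Lemma Tl_decr m q k : 0 <= q <= 1 -> Tl m q k.+1 <= Tl m q k.
Proof. by move=> hq; rewrite (Tl_split m q k) lerDr; apply: cb_ge0. Qed.

Lemma Tl_0m q k : Tl 0 q k = ((k <= 0)%N)%:R.
Proof. by rewrite /Tl big_ord1 cb0 mulr1. Qed.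

Lemma Tl_monoq m q q' k : 0 <= q -> q <= q' -> q' <= 1 -> Tl m q k <= Tl m q' k.
Proof.
move=> q0 qq q1; elim: m k => [|m IH] k; first by rewrite !Tl_0m.
case: k => [|k]; first by rewrite !Tl_0.
have h1 : 0 <= q <= 1 by rewrite q0 /= (le_trans qq q1).
have h2 : 0 <= q' <= 1 by rewrite (le_trans q0 qq) q1.
rewrite !Tl_rec.
have := IH k; have := IH k.+1; have := Tl_decr m k h2; have := Tl_ge0 m k.+1 h1.
have := Tl_ge0 m k.+1 h2.
nra.
Qed.

Lemma Tl_q1 m k : (k <= m)%N -> Tl m 1 k = 1.
Proof.
elim: m k => [|m IH] [|k] hk //; rewrite ?Tl_0 //.
by rewrite Tl_rec IH // subrr mul0r addr0 mul1r.
Qed.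

Lemma Tl_q0 m k : Tl m 0 k.+1 = 0.
Proof.
elim: m k => [|m IH] k; first by rewrite Tl_0m.
by rewrite Tl_rec IH mul0r add0r mulr0.
Qed.

Lemma Tl_pos m q k : 0 <= q <= 1 -> (k <= m)%N -> q ^+ m <= Tl m q k.
Proof.
move=> /andP[q0 q1]; elim: m k => [|m IH] [|k] hk //; rewrite ?Tl_0 ?expr0 //.
  by rewrite exprn_ile1.
rewrite Tl_rec exprS; have := IH k hk.
have hq : 0 <= q <= 1 by rewrite q0 q1.
have := Tl_ge0 m k.+1 hq. nra.
Qed.

Lemma ch_up m q k z : 0 <= q <= 1 -> 1 <= z ->
  z ^+ k * Tl m q k <= (q * z + (1 - q)) ^+ m.
Proof.
move=> hq z1; rewrite -sum_cb /Tl mulr_sumr; apply: ler_sum => j _.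
have c0 := cb_ge0 m j hq.
case: (leqP k j) => h /=; last by rewrite mul0r mulr0; apply: mulr_ge0 => //; apply: exprn_ge0; lra.
rewrite mul1r mulrC; apply: ler_wpM2l => //; exact: ler_weXn2l.
Qed.

Lemma ch_lo m q k z : 0 <= q <= 1 -> 0 < z -> z <= 1 ->
  z ^+ k * (1 - Tl m q k.+1) <= (q * z + (1 - q)) ^+ m.
Proof.
move=> hq z0 z1; rewrite -sum_cb -{1}(sum_cb1 m q) /Tl -sumrB mulr_sumr; apply: ler_sum => j _.
have c0 := cb_ge0 m j hq.
case: (leqP k.+1 j) => h /=; first by rewrite mul1r subrr mulr0; apply: mulr_ge0 => //; apply: exprn_ge0; lra.
rewrite mul0r subr0 mulrC; apply: ler_wpM2l => //; apply: ler_wiXn2l; rewrite ?(ltW z0) //.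
Qed.

End Binom.

Section Binom2.
Variable R : realType.
Implicit Types (q z : R) (m k j : nat).

Definition Tpoly m (a b : R) k : {poly R} :=
  \sum_(j < m.+1) ((k <= j)%N)%:R%:P *
    ('C(m, j)%:R%:P * (a%:P + b%:P * 'X) ^+ j * (1 - (a%:P + b%:P * 'X)) ^+ (m - j)).

Lemma Tpoly_E m a b k r : (Tpoly m a b k).[r] = Tl m (a + b * r) k.
Proof.
rewrite /Tpoly horner_sum /Tl; apply: eq_bigr => j _; rewrite cbE.
by rewrite !(hornerE, horner_exp).
Qed.

Lemma Tl_cont m a b k : continuous (fun r : R => Tl m (a + b * r) k).
Proof.
have -> : (fun r : R => Tl m (a + b * r) k) = horner (Tpoly m a b k).
  by apply: funext => r; rewrite Tpoly_E.
exact: continuous_horner.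
Qed.

Lemma cb_ratio m q j : (j < m)%N ->
  cb m q j.+1 * (j.+1)%:R * (1 - q) = cb m q j * (m - j)%:R * q.
Proof.
move=> hj; rewrite !cbE.
have e := congr1 (fun x : nat => x%:R : R) (mul_bin_left m j); rewrite /= !natrM in e.
have hs : (m - j = (m - j.+1).+1)%N by rewrite subnS prednK // subn_gt0.
rewrite hs in e *.
set s := (m - j.+1)%N in e *.
transitivity ((j.+1%:R * 'C(m, j.+1)%:R) * (q ^+ j.+1 * (1 - q) ^+ s.+1)).
  by rewrite [(1 - q) ^+ s.+1]exprSr; ring.
by rewrite e [q ^+ j.+1]exprSr; ring.
Qed.

Lemma sum_shift_le1 m q a N : 0 <= q <= 1 -> \sum_(i < N) cb m q (a + i) <= Tl m q a.
Proof.
move=> hq; elim: N a => [|N IH] a; first by rewrite big_ord0 Tl_ge0.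
rewrite big_ord_recl addn0 (Tl_split m q a) lerD2l.
apply: le_trans (IH a.+1); rewrite le_eqVlt; apply/orP; left; apply/eqP/eq_bigr => i _.
by rewrite /bump /= addnS.
Qed.

Lemma cb_local m q k t : 0 < q < 1 -> k%:R <= m%:R * q ->
  2 * t%:R ^+ 2 <= m%:R * q * (1 - q) -> cb m q k * (t.+1)%:R <= 2.
Proof.
move=> /andP[q0 q1] hk ht.
have hq : 0 <= q <= 1 by rewrite ltW // ltW.
set D := m%:R * q * (1 - q) in ht.
have c0 := cb_ge0 m k hq.
case: t ht => [|t'] ht.
  have := Tl_le1 m k hq; have := Tl_split m q k; have := Tl_ge0 m k.+1 hq.
  move=> *; rewrite mulr1; lra.
set t := t'.+1 in ht *.
have t1 : 1 <= t%:R :> R by rewrite ler1n.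
have Dp : 0 < D by nra.
set u := t%:R / D.
have uD : u * D = t%:R by rewrite /u mulfVK // gt_eqF.
have u0 : 0 <= u by rewrite /u divr_ge0 // ltW.
have u1 : u * t%:R <= 1 / 2.
  have : u * t%:R * D <= D / 2 by rewrite mulrAC uD; nra.
  move=> h; rewrite -(ler_pM2r Dp); lra.
have step : forall i, (i <= t)%N -> (1 - i%:R * u) * cb m q k <= cb m q (k + i).
  elim => [|i IH] hi; first by rewrite mul0r subr0 mul1r addn0.
  have IH' := IH (ltnW hi).
  set j := (k + i)%N.
  have hj1 : j.+1%:R <= m%:R * q + t%:R.
    rewrite /j -addnS natrD; have : (i.+1)%:R <= t%:R :> R by rewrite ler_nat.
    lra.
  have jm : (j < m)%N.
    rewrite ltnNge; apply/negP => hmj.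
    have : m%:R <= j%:R :> R by rewrite ler_nat.
    rewrite -natr1 in hj1.
    have : t%:R <= t%:R ^+ 2 :> R by rewrite expr2; nra.
    rewrite /D in ht. nra.
  have cj0 := cb_ge0 m j hq.
  have hr := cb_ratio q jm.
  have hmj : (m - j)%:R = m%:R - j%:R :> R by rewrite natrB // ltnW.
  rewrite hmj in hr.
  have key : (1 - u) * cb m q j <= cb m q j.+1.
    have hpos : 0 < j.+1%:R * (1 - q) by apply: mulr_gt0; [rewrite ltr0n | lra].
    rewrite -(ler_pM2r hpos) [X in _ <= X]mulrA hr.
    have br : 0 <= (m%:R - j%:R) * q - (1 - u) * (j.+1%:R * (1 - q)).
      case: (lerP (j.+1%:R) ((m%:R + 1) * q)) => hc.
        rewrite -natr1 in hc *; nra.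
      rewrite -natr1 in hc *.
      have : u * ((j%:R + 1) - m%:R * q) * (1 - q) >= 0.
        apply: mulr_ge0; last lra. apply: mulr_ge0 => //. nra.
      rewrite /D in uD. nra.
    nra.
  rewrite addnS -/j.
  have h1u : 0 <= 1 - u by nra.
  have : (1 - u) * ((1 - i%:R * u) * cb m q k) <= (1 - u) * cb m q j by apply: ler_wpM2l.
  have : 0 <= i%:R * u * u * cb m q k by apply: mulr_ge0 => //; apply: mulr_ge0 => //; apply: mulr_ge0.
  rewrite -natr1; nra.
have hsum := sum_shift_le1 m k t.+1 hq.
have hT := Tl_le1 m k hq.
have : \sum_(i < t.+1) (cb m q k / 2) <= \sum_(i < t.+1) cb m q (k + i).
  apply: ler_sum => i _; apply: le_trans (step i _); last by rewrite -ltnS.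
  have : i%:R * u <= t%:R * u :> R by apply: ler_wpM2r => //; rewrite ler_nat -ltnS.
  nra.
rewrite sumr_const card_ord => h.
have : (cb m q k / 2) *+ t.+1 = cb m q k * (t.+1)%:R / 2 by rewrite -mulr_natr; ring.
move=> e; rewrite e in h; lra.
Qed.


Lemma cb_refl m q k : (k <= m)%N -> cb m q k = cb m (1 - q) (m - k).
Proof.
move=> hk; rewrite !cbE bin_sub // subKn // (_ : 1 - (1 - q) = q); last by ring.
by ring.
Qed.

Lemma exists_t (D : R) : 0 <= D -> exists t : nat, 2 * t%:R ^+ 2 <= D /\ D < 2 * (t.+1)%:R ^+ 2.
Proof.
move=> D0.
have ex : exists t : nat, D < 2 * (t.+1)%:R ^+ 2.
  exists (Num.Def.archi_bound D); have := archi_boundP D0.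
  set N := Num.Def.archi_bound D => h.
  have : N%:R <= (N.+1)%:R ^+ 2 :> R.
    rewrite -natrX ler_nat; apply: leq_trans (leqnSn N) _; rewrite expnS.
    by apply: leq_pmulr.
  lra.
case: (ex_minnP ex) => t ht hmin; exists t; split => //.
case: t ht hmin => [|s] ht hmin; first by rewrite expr0n /= mulr0.
have : ~~ (D < 2 * (s.+1)%:R ^+ 2) by apply/negP => /hmin; rewrite ltnn.
by rewrite -leNgt.
Qed.

Lemma cb_sq m q k : 0 < q < 1 -> cb m q k ^+ 2 * (m%:R * q * (1 - q)) <= 8.
Proof.
move=> /andP[q0 q1].
have hq : 0 <= q <= 1 by rewrite !ltW.
have D0 : 0 <= m%:R * q * (1 - q) by apply: mulr_ge0; [apply: mulr_ge0; rewrite ?ler0n ?ltW | lra].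
have [t [ht1 ht2]] := exists_t D0.
have fin : forall c : R, 0 <= c -> c * (t.+1)%:R <= 2 -> c ^+ 2 * (m%:R * q * (1 - q)) <= 8.
  move=> c c0 hc.
  have t0 : 0 <= (t.+1)%:R :> R by rewrite ler0n.
  have : (c * (t.+1)%:R) ^+ 2 <= 4.
    rewrite expr2; have : 0 <= c * (t.+1)%:R by apply: mulr_ge0.
    nra.
  have : c ^+ 2 * (m%:R * q * (1 - q)) <= c ^+ 2 * (2 * (t.+1)%:R ^+ 2).
    by apply: ler_wpM2l; [apply: exprn_ge0 | apply: ltW].
  rewrite exprMn; nra.
have c0 := cb_ge0 m k hq.
case: (lerP (k%:R) (m%:R * q)) => hk.
  by apply: fin => //; apply: cb_local => //; rewrite q0 q1.
case: (leqP k m) => hkm; last by rewrite cb_big // expr0n /= mul0r.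
rewrite cb_refl //; rewrite (cb_refl q hkm) in c0.
apply: fin => //; apply: cb_local.
- apply/andP; split; lra.
- rewrite natrB //; lra.
- by rewrite (_ : m%:R * (1 - q) * (1 - (1 - q)) = m%:R * q * (1 - q)); last ring.
Qed.

Lemma pmf_bound (p : R) m q k : p < 1 -> 1 - p <= q -> q <= 1 ->
  ((1 - q) * cb m q k) ^+ 2 * (m%:R * (1 - p)) <= 8.
Proof.
move=> p1 hq q1.
have p0 : 0 < 1 - p by lra.
have q0 : 0 < q by lra.
case: (ltrP q 1) => q1'; last first.
  have -> : q = 1 by apply/eqP; rewrite eq_le q1 q1'.
  by rewrite subrr mul0r expr0n /= mul0r.
have hq' : 0 <= q <= 1 by rewrite ltW.
have c0 := cb_ge0 m k hq'.
have hq01 : 0 < q < 1 by rewrite q0 q1'.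
have h := cb_sq m k hq01.
have m0 : 0 <= m%:R :> R by rewrite ler0n.
have A : 0 <= cb m q k ^+ 2 by apply: exprn_ge0.
rewrite exprMn.
have : (1 - q) ^+ 2 * cb m q k ^+ 2 * (m%:R * (1 - p)) <= cb m q k ^+ 2 * (m%:R * q * (1 - q)).
  have e1 : (1 - q) ^+ 2 <= (1 - q) by rewrite expr2; nra.
  have B : 0 <= cb m q k ^+ 2 * m%:R by apply: mulr_ge0.
  set X := cb m q k ^+ 2 * m%:R in B *.
  have -> : (1 - q) ^+ 2 * cb m q k ^+ 2 * (m%:R * (1 - p)) = (1 - q) ^+ 2 * (X * (1 - p)) by rewrite /X; ring.
  have -> : cb m q k ^+ 2 * (m%:R * q * (1 - q)) = ((1 - q) * X) * q by rewrite /X; ring.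
  apply: le_trans (_ : (1 - q) * (X * (1 - p)) <= _).
    by apply: ler_wpM2r => //; apply: mulr_ge0 => //; lra.
  rewrite mulrA; apply: ler_wpM2l => //; apply: mulr_ge0 => //; lra.
lra.
Qed.

Definition rho (p : R) := 1 / 2 + 2 * p * (1 - p).

Lemma tail_up (p : R) m k : 1 / 2 < p < 1 -> (m <= 2 * k)%N -> Tl m (1 - p) k <= rho p ^+ m.
Proof.
move=> /andP[p1 p2] hk.
set w := (2 * (1 - p))^-1.
have w0 : 0 < 2 * (1 - p) by lra.
have ww : w * (2 * (1 - p)) = 1 by rewrite /w mulVf // gt_eqF.
have w1 : 1 <= w.
  have : 2 * (1 - p) <= 1 by lra.
  move=> h; rewrite -ww; have : 0 < w by rewrite /w invr_gt0. nra.
have hq : 0 <= 1 - p <= 1 by apply/andP; split; lra.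
have := ch_up m k hq (_ : 1 <= w ^+ 2); rewrite -exprM.
have -> : (1 - p) * w ^+ 2 + (1 - (1 - p)) = rho p * w.
  rewrite /rho expr2. have : w * (1 - p) = 1 / 2 by lra. nra.
rewrite exprMn => h.
have wm : w ^+ m <= w ^+ (2 * k) by apply: ler_weXn2l.
have T0 := Tl_ge0 m k hq.
have wp : 0 < w ^+ m by apply: exprn_gt0; lra.
have : w ^+ m * Tl m (1 - p) k <= w ^+ m * rho p ^+ m.
  apply: (le_trans (ler_wpM2r T0 wm)); rewrite (mulrC (w ^+ m)).
  by apply: h; rewrite expr2; nra.
by rewrite ler_pM2l.
Qed.

Lemma tail_lo (p : R) n k : 1 / 2 < p < 1 -> (2 * k <= n)%N -> 1 - Tl n p k.+1 <= rho p ^+ n.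
Proof.
move=> /andP[p1 p2] hk.
set v := 2 * (1 - p).
have v0 : 0 < v by rewrite /v; lra.
have v1 : v <= 1 by rewrite /v; lra.
have hq : 0 <= p <= 1 by apply/andP; split; lra.
have z0 : 0 < v ^+ 2 by apply: exprn_gt0.
have z1 : v ^+ 2 <= 1 by rewrite expr2; nra.
have := ch_lo n k hq z0 z1; rewrite -exprM.
have -> : p * v ^+ 2 + (1 - p) = rho p * v by rewrite /rho /v expr2; field.
rewrite [X in _ <= X]exprMn => h.
have wm : v ^+ n <= v ^+ (2 * k) by apply: ler_wiXn2l => //; rewrite ltW.
have T1 := Tl_le1 n k.+1 hq.
have wp : 0 < v ^+ n by apply: exprn_gt0.
have : v ^+ n * (1 - Tl n p k.+1) <= v ^+ n * rho p ^+ n.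
  apply: (le_trans (ler_wpM2r _ wm)); first lra.
  by rewrite (mulrC (v ^+ n)).
by rewrite ler_pM2l.
Qed.

End Binom2.

Section Game.
Variables (R : realType) (p : R).

Definition Wt n (sigma : profile R n) (omega : bool) (i : 'I_n) (x : bool) : R :=
  \sum_(s : bool) sig_prob p omega s * act_prob (sigma i s) x.

Definition cnt n (a : {ffun 'I_n -> bool}) : nat := (\sum_i (a i : nat))%N.

Lemma expect_red n (sigma : profile R n) (g : bool -> {ffun 'I_n -> bool} -> R) :
  expect p sigma (fun omega _ a => g omega a) =
  \sum_(omega : bool) \sum_(a : {ffun 'I_n -> bool})
     (1 / 2 * \prod_i Wt sigma omega i (a i)) * g omega a.
Proof.
rewrite /expect; apply: eq_bigr => omega _; rewrite exchange_big /=; apply: eq_bigr => a _.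
rewrite -big_distrl /=; congr (_ * _).
rewrite /weight /Wt.
under eq_bigr => s _ do rewrite -mulrA -big_split /=.
rewrite -mulr_sumr; congr (_ * _).
by rewrite bigA_distr_bigA.
Qed.

Lemma cnt_le n (a : {ffun 'I_n -> bool}) : (cnt a < n.+1)%N.
Proof.
rewrite ltnS /cnt; apply: leq_trans (_ : (\sum_(i : 'I_n) 1 <= n)%N).
  by apply: leq_sum => i _; case: (a i).
by rewrite sum1_card card_ord.
Qed.

Lemma gen_sum n (W : 'I_n -> bool -> R) (F : nat -> R) :
  \sum_(a : {ffun 'I_n -> bool}) (\prod_i W i (a i)) * F (cnt a) =
  \sum_(k < n.+1) (\prod_i ((W i true)%:P * 'X + (W i false)%:P))`_k * F k.
Proof.
have e : \prod_i ((W i true)%:P * 'X + (W i false)%:P) =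
    \sum_(a : {ffun 'I_n -> bool}) (\prod_i W i (a i))%:P * 'X^(cnt a).
  rewrite (_ : \prod_i (_) = \prod_i \sum_(b : bool) (W i b)%:P * 'X^b); last first.
    by apply: eq_bigr => i _; rewrite big_bool /= expr1 expr0 mulr1.
  rewrite bigA_distr_bigA; apply: eq_bigr => a _.
  by rewrite big_split /= rmorph_prod prodrXr.
rewrite e.
under [RHS]eq_bigr => k _ do rewrite coef_sum big_distrl /=.
rewrite exchange_big /=; apply: eq_bigr => a _.
rewrite (eq_bigr (fun k : 'I_n.+1 => (\prod_i W i (a i)) * ((k == cnt a :> nat)%:R * F k))); last first.
  by move=> k _; rewrite coefCM coefXn mulrA.
rewrite -mulr_sumr; congr (_ * _).
under eq_bigr => k _ do rewrite eq_sym.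
by rewrite sum_pred1 cnt_le.
Qed.

Definition Qv (x : bool -> R) (omega : bool) : R := \sum_(s : bool) sig_prob p omega s * x s.

Lemma sig_sum omega : \sum_(s : bool) sig_prob p omega s = 1.
Proof. by rewrite big_bool; case: omega; rewrite /sig_prob /=; ring. Qed.

Lemma Wt_true n (sigma : profile R n) om i : Wt sigma om i true = Qv (sigma i) om.
Proof. by []. Qed.

Lemma Wt_false n (sigma : profile R n) om i : Wt sigma om i false = 1 - Qv (sigma i) om.
Proof.
rewrite /Wt /Qv -(sig_sum om) -sumrB; apply: eq_bigr => s _ /=; ring.
Qed.

Lemma QvT x : Qv x true = p * x true + (1 - p) * x false.
Proof. by rewrite /Qv big_bool /sig_prob. Qed.

Lemma QvF x : Qv x false = (1 - p) * x true + p * x false.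
Proof. by rewrite /Qv big_bool /sig_prob. Qed.

Lemma sym_sum n tau om (F : nat -> R) :
  \sum_(a : {ffun 'I_n -> bool})
     (1 / 2 * \prod_i Wt (@symmetric_profile R n tau) om i (a i)) * F (cnt a) =
  1 / 2 * \sum_(k < n.+1) cb n (Qv tau om) k * F k.
Proof.
under eq_bigr => a _ do rewrite -mulrA.
rewrite -mulr_sumr gen_sum; congr (_ * _); apply: eq_bigr => k _; congr (_ * _).
rewrite /cb; congr (_`_k).
rewrite (eq_bigr (fun _ => bp (Qv tau om))); last by move=> i _; rewrite Wt_true Wt_false.
by rewrite prodr_const card_ord.
Qed.

Lemma theta_formula n tau B :
  theta_of p B (@symmetric_profile R n tau) =
  1 / 2 * Tl n (Qv tau true) B + 1 / 2 * (1 - Tl n (Qv tau false) B).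
Proof.
rewrite /theta_of (expect_red _ (fun omega (a : {ffun 'I_n -> bool}) => if omega then (if funded B a then 1 else 0)
    else (if funded B a then 0 else 1))).
rewrite big_bool /=; congr (_ + _).
  rewrite (eq_bigr (fun a : {ffun 'I_n -> bool} => (1 / 2 * \prod_i Wt (@symmetric_profile R n tau) true i (a i)) *
     (fun k => ((B <= k)%N)%:R) (cnt a))); last first.
    by move=> a _; rewrite /funded /cnt; case: ifP.
  have h := sym_sum n tau true (fun k => ((B <= k)%N)%:R); rewrite /= in h.
  by rewrite h; congr (_ * _); rewrite /Tl; apply: eq_bigr => k _; rewrite mulrC.
rewrite (eq_bigr (fun a : {ffun 'I_n -> bool} => (1 / 2 * \prod_i Wt (@symmetric_profile R n tau) false i (a i)) *
   (fun k => 1 - ((B <= k)%N)%:R) (cnt a))); last first.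
  by move=> a _; rewrite /funded /cnt; case: ifP => _ /=; rewrite ?mulr1n ?mulr0n ?subrr ?subr0.
have h := sym_sum n tau false (fun k => 1 - ((B <= k)%N)%:R); rewrite /= in h.
rewrite h; congr (_ * _); under eq_bigr => k _ do rewrite mulrBr mulr1.
by rewrite sumrB sum_cb1 /Tl; congr (_ - _); apply: eq_bigr => k _; rewrite mulrC.
Qed.


Lemma prod_if n (i : 'I_n) (x y : {poly R}) :
  \prod_(j : 'I_n) (if j == i then x else y) = x * y ^+ n.-1.
Proof.
rewrite (bigD1 i) //= eqxx; congr (_ * _).
rewrite (eq_bigr (fun _ => y)); last by move=> j /negbTE ->.
by rewrite prodr_const cardC1 card_ord.
Qed.

Lemma nontriv_formula n tau B :
  expect p (@symmetric_profile R n tau) (fun _ _ a => if funded B a then 1 else 0) =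
  1 / 2 * Tl n (Qv tau true) B + 1 / 2 * Tl n (Qv tau false) B.
Proof.
rewrite (expect_red _ (fun omega (a : {ffun 'I_n -> bool}) => if funded B a then 1 else 0)).
rewrite big_bool /=; congr (_ + _).
  rewrite (eq_bigr (fun a : {ffun 'I_n -> bool} => (1 / 2 * \prod_i Wt (@symmetric_profile R n tau) true i (a i)) *
     (fun k => ((B <= k)%N)%:R) (cnt a))); last first.
    by move=> a _; rewrite /funded /cnt; case: ifP.
  have h := sym_sum n tau true (fun k => ((B <= k)%N)%:R); rewrite /= in h.
  by rewrite h; congr (_ * _); rewrite /Tl; apply: eq_bigr => k _; rewrite mulrC.
rewrite (eq_bigr (fun a : {ffun 'I_n -> bool} => (1 / 2 * \prod_i Wt (@symmetric_profile R n tau) false i (a i)) *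
   (fun k => ((B <= k)%N)%:R) (cnt a))); last first.
  by move=> a _; rewrite /funded /cnt; case: ifP.
have h := sym_sum n tau false (fun k => ((B <= k)%N)%:R); rewrite /= in h.
by rewrite h; congr (_ * _); rewrite /Tl; apply: eq_bigr => k _; rewrite mulrC.
Qed.

Lemma payoff_om m b tau tau' (i : 'I_m.+1) om :
  \sum_(a : {ffun 'I_m.+1 -> bool})
    (1 / 2 * \prod_j Wt (deviate (@symmetric_profile R m.+1 tau) i tau') om j (a j)) *
      payoff R b.+1 i om a =
  1 / 2 * (if om then 1 else -1) * (Qv tau' om * Tl m (Qv tau om) b).
Proof.
set sg := deviate (@symmetric_profile R m.+1 tau) i tau'.
set c : R := if om then 1 else -1.
pose W' (j : 'I_m.+1) (x : bool) := if j == i then (if x then Wt sg om i true else 0) else Wt sg om j x.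
have e1 : forall a : {ffun 'I_m.+1 -> bool},
    (1 / 2 * \prod_j Wt sg om j (a j)) * payoff R b.+1 i om a =
    1 / 2 * c * ((\prod_j W' j (a j)) * (fun k => ((b.+1 <= k)%N)%:R) (cnt a)).
  move=> a; rewrite /payoff /funded /= -/(cnt a).
  rewrite (bigD1 i) //= [in RHS](bigD1 i) //= /W' eqxx.
  rewrite [in RHS](eq_bigr (fun j => Wt sg om j (a j))); last by move=> j; rewrite ?andTb => /negbTE ->.
  rewrite /c; move: (1 / 2 : R) (if om then 1 else -1 : R) => u v.
  case: (a i) => /=; last by ring.
  by case: (b < cnt a)%N => /=; rewrite ?mulr1n ?mulr0n; ring.
have h := gen_sum W' (fun k => ((b.+1 <= k)%N)%:R); rewrite /= in h.
rewrite (eq_bigr _ (fun a _ => e1 a)) -mulr_sumr h; congr (_ * _).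
have -> : \prod_j ((W' j true)%:P * 'X + (W' j false)%:P) =
    (if i == i then (Qv tau' om)%:P * 'X else bp (Qv tau om)) * bp (Qv tau om) ^+ m.
  rewrite -(prod_if i); apply: eq_bigr => j _; rewrite /W'.
  case: ifP => hj; first by rewrite eqxx polyC0 addr0 Wt_true /sg /deviate eqxx.
  by rewrite Wt_true Wt_false /sg /deviate hj.
rewrite eqxx big_ord_recl /= -mulrA coefCM coefXM /= !mulr0 add0r.
rewrite /Tl mulr_sumr; apply: eq_bigr => k _.
by rewrite coefCM coefXM /= /bump /= add1n ltnS add0n -/(cb m _ k) -mulrA (mulrC (cb m _ k)).
Qed.

Lemma payoff_formula m b tau tau' (i : 'I_m.+1) :
  exp_payoff p b.+1 (deviate (@symmetric_profile R m.+1 tau) i tau') i =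
  1 / 2 * (Qv tau' true * Tl m (Qv tau true) b) - 1 / 2 * (Qv tau' false * Tl m (Qv tau false) b).
Proof.
rewrite /exp_payoff (expect_red _ (fun omega (a : {ffun 'I_m.+1 -> bool}) => payoff R b.+1 i omega a)).
rewrite big_bool /= !payoff_om; ring.
Qed.

End Game.

Section Eq.
Variables (R : realType) (p : R).
Hypothesis hp : 1 / 2 < p < 1.

Let p1 : 1 / 2 < p. Proof. by case/andP: hp. Qed.
Let p2 : p < 1. Proof. by case/andP: hp. Qed.

Definition Pay m b (tau x : bool -> R) : R :=
  1 / 2 * (Qv p x true * Tl m (Qv p tau true) b) - 1 / 2 * (Qv p x false * Tl m (Qv p tau false) b).

Lemma dev_self n (tau : bool -> R) (i : 'I_n) :
  deviate (@symmetric_profile R n tau) i tau = symmetric_profile tau.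
Proof. by apply: funext => j; rewrite /deviate; case: ifP. Qed.

Lemma BNE_pay m b tau : is_BNE p b.+1 (@symmetric_profile R m.+1 tau) ->
  forall x, strategy_ok x -> Pay m b tau x <= Pay m b tau tau.
Proof.
move=> [_ H] x hx.
have := H ord0 x hx; rewrite !payoff_formula.
by rewrite -(dev_self tau ord0) payoff_formula.
Qed.

Definition strat (u v : R) : bool -> R := fun s => if s then u else v.

Lemma strat_ok u v : 0 <= u <= 1 -> 0 <= v <= 1 -> strategy_ok (strat u v).
Proof. by move=> hu hv [] /=. Qed.

Lemma Pay_strat m b tau u v : Pay m b tau (strat u v) =
  1 / 2 * (u * (p * Tl m (Qv p tau true) b - (1 - p) * Tl m (Qv p tau false) b) +
           v * ((1 - p) * Tl m (Qv p tau true) b - p * Tl m (Qv p tau false) b)).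
Proof. rewrite /Pay !(QvT, QvF) /strat; ring. Qed.

Lemma Pay_tau m b tau : Pay m b tau tau = Pay m b tau (strat (tau true) (tau false)).
Proof. by rewrite /Pay !(QvT, QvF). Qed.

Lemma Q01 (x : bool -> R) om : strategy_ok x -> 0 <= Qv p x om <= 1.
Proof.
move=> hx; have := hx true; have := hx false.
have := p1; have := p2.
case: om; rewrite ?QvT ?QvF => P2 P1 /andP[a0 a1] /andP[b0 b1]; apply/andP; split; nra.
Qed.

Section BNEfacts.
Variables (m b : nat) (tau : bool -> R).
Hypothesis hb : (b <= m)%N.
Hypothesis hB : is_BNE p b.+1 (@symmetric_profile R m.+1 tau).

Let a := tau true.
Let r := tau false.
Let QH := Qv p tau true.
Let QL := Qv p tau false.
Let PH := Tl m QH b.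
Let PL := Tl m QL b.
Let A := p * PH - (1 - p) * PL.
Let G := (1 - p) * PH - p * PL.

Let tok : strategy_ok tau. Proof. by case: hB => /(_ ord0). Qed.
Let a01 : 0 <= a <= 1. Proof. exact: tok. Qed.
Let r01 : 0 <= r <= 1. Proof. exact: tok. Qed.
Let QHe : QH = p * a + (1 - p) * r. Proof. exact: QvT. Qed.
Let QLe : QL = (1 - p) * a + p * r. Proof. exact: QvF. Qed.
Let QH01 : 0 <= QH <= 1. Proof. exact: Q01. Qed.
Let QL01 : 0 <= QL <= 1. Proof. exact: Q01. Qed.
Let PH01 : 0 <= PH <= 1. Proof. by rewrite Tl_ge0 ?Tl_le1. Qed.
Let PL01 : 0 <= PL <= 1. Proof. by rewrite Tl_ge0 ?Tl_le1. Qed.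

Let dev u v : 0 <= u <= 1 -> 0 <= v <= 1 -> u * A + v * G <= a * A + r * G.
Proof.
move=> hu hv; have := BNE_pay hB (strat_ok hu hv).
rewrite Pay_tau !Pay_strat -/QH -/QL -/PH -/PL -/A -/G -/a -/r; lra.
Qed.

Let z1 : 0 <= (1 : R) <= 1. Proof. by rewrite ler01 lexx. Qed.
Let z0 : 0 <= (0 : R) <= 1. Proof. by rewrite lexx ler01. Qed.

Let devG1 : G * (1 - r) <= 0.
Proof. have := dev a01 z1; have -> : G * (1 - r) = 1 * G - r * G by ring. lra. Qed.
Let devA1 : A * (1 - a) <= 0.
Proof. have := dev z1 r01; have -> : A * (1 - a) = 1 * A - a * A by ring. lra. Qed.
Let devG0 : 0 <= G * r.
Proof. have := dev a01 z0; have -> : G * r = r * G by ring. have -> : (0 : R) * G = 0 by ring. lra. Qed.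

Lemma G_le0 : G <= 0.
Proof.
have P1 := p1; have P2 := p2.
rewrite leNgt; apply/negP => G0.
have r1 : r = 1.
  have : 1 <= r.
    rewrite leNgt; apply/negP => h.
    have : 0 < G * (1 - r) by apply: mulr_gt0; lra.
    have := devG1; lra.
  case/andP: r01; lra.
have PHp : 0 < PH by case/andP: PL01 => pl0 _; rewrite /G in G0; nra.
have A0 : 0 < A.
  rewrite /A; rewrite /G in G0; case/andP: PL01 => pl0 _; nra.
have a1 : a = 1.
  have : 1 <= a.
    rewrite leNgt; apply/negP => h.
    have : 0 < A * (1 - a) by apply: mulr_gt0; lra.
    have := devA1; lra.
  case/andP: a01; lra.
have QH1 : QH = 1 by rewrite QHe a1 r1; ring.
have QL1 : QL = 1 by rewrite QLe a1 r1; ring.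
move: G0; rewrite /G /PH /PL QH1 QL1 (@Tl_q1 R m b hb); lra.
Qed.

Lemma T_step_le (q : R) : 0 <= q <= 1 -> Tl m.+1 q b.+1 <= Tl m q b.
Proof.
move=> hq; rewrite Tl_step; have := cb_ge0 m b hq; case/andP: hq => _ q1; nra.
Qed.

Lemma a_lt1_PH0 : a < 1 -> PH = 0.
Proof.
have P1 := p1; have P2 := p2.
move=> a1.
have A0 : A <= 0 by have := devA1; nra.
have GG := G_le0.
case: (lerP r a) => ar.
  have : QL <= QH by rewrite QHe QLe; nra.
  move=> hQ; have : PL <= PH by apply: Tl_monoq => //; case/andP: QL01; case/andP: QH01.
  rewrite /A in A0; case/andP: PH01 => ph0 _; nra.
have r0 : 0 < r by case/andP: a01; lra.
have G0 : G = 0 by have := devG0; nra.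
have : QH <= QL by rewrite QHe QLe; nra.
move=> hQ; have : PH <= PL by apply: Tl_monoq => //; case/andP: QL01; case/andP: QH01.
rewrite /G in G0; case/andP: PH01 => ph0 _; nra.
Qed.

Lemma theta_upper :
  theta_of p b.+1 (@symmetric_profile R m.+1 tau) <= 1 / 2 \/
  exists q, [/\ 1 - p <= q, q <= 1 &
    2 * p * theta_of p b.+1 (@symmetric_profile R m.+1 tau) <= 3 * p - 1 + p * ((1 - q) * cb m q b)].
Proof.
have P1 := p1; have P2 := p2.
rewrite theta_formula -/QH -/QL.
case: (ltrP a 1) => ha.
  left; have := a_lt1_PH0 ha; rewrite /PH => h0.
  have := T_step_le QH01; have := Tl_ge0 m.+1 b.+1 QL01; rewrite h0; lra.
have a1 : a = 1 by case/andP: a01 => _ ?; apply/eqP; rewrite eq_le ha andbT.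
right; exists QL; split.
- by rewrite QLe a1; case/andP: r01; nra.
- by case/andP: QL01.
rewrite !Tl_step -/PH -/PL.
have GG := G_le0; rewrite /G in GG.
have c0 := cb_ge0 m b QH01.
have c1 := cb_ge0 m b QL01.
case/andP: QH01 => qh0 qh1; case/andP: PH01 => ph0 ph1.
have e : 0 <= (1 - QH) * cb m QH b by nra.
nra.
Qed.

End BNEfacts.

Lemma theta_lower m b tau : (b <= m)%N -> is_sym_nontrivial_BNE p b.+1 m.+1 tau ->
  p * Tl m.+1 p b.+1 + p - (1 - p) - p * Tl m (1 - p) b <=
  2 * p * theta_of p b.+1 (@symmetric_profile R m.+1 tau).
Proof.
move=> hb [hB hN].
have P1 := p1; have P2 := p2.
have tok : strategy_ok tau by case: hB => /(_ ord0).
have a01 := tok true; have r01 := tok false.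
have QH01 := Q01 true tok; have QL01 := Q01 false tok.
have QHe := QvT p tau; have QLe := QvF p tau.
have GG := G_le0 hb hB.
move: hN; rewrite /nontrivial nontriv_formula => hN.
rewrite theta_formula.
set a := tau true in a01 QHe QLe *; set r := tau false in r01 QHe QLe *.
set QH := Qv p tau true in QH01 QHe GG hN *.
set QL := Qv p tau false in QL01 QLe GG hN *.
set PH := Tl m QH b in GG *; set PL := Tl m QL b in GG *.
have PH01 : 0 <= PH <= 1 by rewrite Tl_ge0 ?Tl_le1.
have PL01 : 0 <= PL <= 1 by rewrite Tl_ge0 ?Tl_le1.
have z0 : 0 <= (0 : R) <= 1 by rewrite lexx ler01.
have devG0 : 0 <= r * ((1 - p) * PH - p * PL).
  have := BNE_pay hB (strat_ok a01 z0); rewrite Pay_tau !Pay_strat -/a -/r -/QH -/QL -/PH -/PL.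
  have -> : (0 : R) * ((1 - p) * PH - p * PL) = 0 by ring.
  lra.
have TH := T_step_le m b QH01; have TL := T_step_le m b QL01.
rewrite -/PH -/PL in TH TL.
have TH0 := Tl_ge0 m.+1 b.+1 QH01; have TL0 := Tl_ge0 m.+1 b.+1 QL01.
have a1 : a = 1.
  case: (ltrP a 1) => ha; last by case/andP: a01 => _ ?; apply/eqP; rewrite eq_le ha andbT.
  exfalso.
  have PH0 : PH = 0 by apply: (a_lt1_PH0 hb hB ha).
  have PLp : 0 < PL by rewrite PH0 in TH; lra.
  have r0 : r = 0.
    rewrite PH0 in devG0; case/andP: r01 => r0 _.
    have : r * (p * PL) <= 0 by nra.
    move=> h; apply/eqP; rewrite eq_le r0 andbT.
    have : 0 < p * PL by apply: mulr_gt0 => //; lra.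
    move=> h2; rewrite leNgt; apply/negP => h3; have : 0 < r * (p * PL) by apply: mulr_gt0.
    lra.
  case: (ltrP 0 a) => a0.
    have hQ : 0 < QH by rewrite QHe r0; nra.
    have := Tl_pos QH01 hb; rewrite -/PH PH0.
    have : 0 < QH ^+ m by apply: exprn_gt0.
    case/andP: QH01 => _ _ h1 h2; lra.
  have a0' : a = 0 by case/andP: a01 => ? _; apply/eqP; rewrite eq_le a0.
  have : QL = 0 by rewrite QLe a0' r0; ring.
  move=> hQL; move: hN; rewrite hQL (@Tl_q0 R) => hN.
  rewrite PH0 in TH; lra.
have hQH : p <= QH by rewrite QHe a1; case/andP: r01; nra.
have TP := Tl_monoq m.+1 b.+1 (ltW (lt_trans (_ : 0 < 1 / 2) P1)) hQH (_ : QH <= 1).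
have hPL : p * PL <= (1 - p) + p * Tl m (1 - p) b.
  have T0 : 0 <= Tl m (1 - p) b by apply: Tl_ge0; apply/andP; split; lra.
  case: (ltrP ((1 - p) * PH - p * PL) 0) => hG.
    have r0 : r = 0.
      case/andP: r01 => r0 _; apply/eqP; rewrite eq_le r0 andbT leNgt; apply/negP => h.
      have : r * ((1 - p) * PH - p * PL) < 0 by rewrite pmulr_rlt0.
      lra.
    have -> : PL = Tl m (1 - p) b by rewrite /PL QLe a1 r0; congr Tl; ring.
    nra.
  case/andP: PH01 => _ ph1; nra.
nra.
Unshelve. all: try lra.
Qed.

End Eq.

Local Open Scope classical_set_scope.
Local Open Scope ring_scope.

Lemma half_le m : ((m.+1)./2 <= m)%N.
Proof.
have := odd_double_half m.+1; rewrite -muln2.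
have : (odd m.+1 <= 1)%N by case: (odd _).
set b := (m.+1)./2; lia.
Qed.

Section Main.
Variables (R : realType) (p : R).
Hypothesis hp : 1 / 2 < p < 1.

Lemma exists_eq m b : (b <= m)%N -> exists tau, is_sym_nontrivial_BNE p b.+1 m.+1 tau.
Proof.
move=> hb.
have P1 : 1 / 2 < p by case/andP: hp.
have P2 : p < 1 by case/andP: hp.
pose f := fun r : R => (1 - p) * Tl m (p * 1 + (1 - p) * r) b - p * Tl m ((1 - p) * 1 + p * r) b.
have fc : continuous f.
  have -> : f = horner ((1 - p)%:P * Tpoly m (p * 1) (1 - p) b - p%:P * Tpoly m ((1 - p) * 1) p b).
    by apply: funext => r; rewrite /f hornerD hornerN !hornerCM !Tpoly_E.
  exact: continuous_horner.
have [r [r01 hr]] : exists r : R, 0 <= r <= 1 /\ (f r = 0 \/ (r = 0 /\ f 0 <= 0)).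
  case: (lerP (f 0) 0) => h0; first by exists 0; split; [rewrite lexx ler01 | right].
  have f1 : f 1 < 0.
    rewrite /f (_ : p * 1 + (1 - p) * 1 = 1); last by ring.
    rewrite (_ : (1 - p) * 1 + p * 1 = 1); last by ring.
    rewrite (@Tl_q1 R m b hb); lra.
  have hc : {within `[0, 1], continuous f}%classic by apply: continuous_subspaceT.
  have := @IVT R f 0 1 0 ler01 hc.
  case; first by apply/andP; split; [rewrite ge_min; apply/orP; right; lra | rewrite le_max; apply/orP; left; lra].
  move=> c; rewrite in_itv /= => hc0 fc0; exists c; split => //; by left.
set tau := strat 1 r.
have tok : strategy_ok tau by apply: strat_ok => //; rewrite ler01 lexx.
have QH : Qv p tau true = p * 1 + (1 - p) * r by rewrite QvT.
have QL : Qv p tau false = (1 - p) * 1 + p * r by rewrite QvF.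
have QH01 := Q01 hp true tok; have QL01 := Q01 hp false tok.
exists tau; split; last first.
  rewrite /nontrivial nontriv_formula.
  have hQ : p <= Qv p tau true by rewrite QH; case/andP: r01; nra.
  have := Tl_pos QH01 (_ : (b.+1 <= m.+1)%N); rewrite ltnS => /(_ hb) h.
  have : 0 < Qv p tau true ^+ m.+1 by apply: exprn_gt0; lra.
  have := Tl_ge0 m.+1 b.+1 QL01; lra.
split; first by move=> i.
move=> i tau' hok.
rewrite payoff_formula -(dev_self tau i) payoff_formula -/(Pay p m b tau tau') -/(Pay p m b tau tau).
rewrite Pay_tau (_ : Pay p m b tau tau' = Pay p m b tau (strat (tau' true) (tau' false))); last first.
  by rewrite /Pay !(QvT, QvF).
rewrite !Pay_strat /tau /strat /= -/tau QH QL.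
set PH := Tl m (p * 1 + (1 - p) * r) b.
set PL := Tl m ((1 - p) * 1 + p * r) b.
have hPL : PL <= PH.
  apply: Tl_monoq; case/andP: r01 => r0 r1; nra.
have PL0 : 0 <= PL by apply: Tl_ge0; rewrite -QL.
have A0 : 0 <= p * PH - (1 - p) * PL by nra.
have := hok true; have := hok false => /andP[v0 v1] /andP[u0 u1].
have hA : tau' true * (p * PH - (1 - p) * PL) <= 1 * (p * PH - (1 - p) * PL) by nra.
have hG : tau' false * ((1 - p) * PH - p * PL) <= r * ((1 - p) * PH - p * PL).
  case: hr => [hf|[r0 hf]].
    by rewrite /f -/PH -/PL in hf; rewrite hf !mulr0.
  subst r; rewrite /f -/PH -/PL in hf; rewrite mul0r; nra.
lra.
Qed.

Lemma eq_spec m b : (b <= m)%N -> is_sym_nontrivial_BNE p b.+1 m.+1 (the_equilibrium p b.+1 m.+1).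
Proof. by move=> hb; rewrite /the_equilibrium; apply: epsilon_spec; exact: exists_eq. Qed.


Definition Lc : R := (3 * p - 1) / (2 * p).

Lemma Lc_eq : Lc * (2 * p) = 3 * p - 1.
Proof. rewrite /Lc mulfVK //; case/andP: hp => h _; apply: lt0r_neq0 => /=; lra. Qed.

Lemma theta_up_bound m b (e : R) : (b <= m)%N -> 0 < e -> 8 < e ^+ 2 * (m%:R * (1 - p)) ->
  theta p b.+1 m.+1 <= Lc + e / 2.
Proof.
move=> hb e0 he.
have P1 : 1 / 2 < p by case/andP: hp.
have P2 : p < 1 by case/andP: hp.
have hL := Lc_eq.
have [hB _] := eq_spec hb.
rewrite /theta.
case: (theta_upper hp hb hB) => [h|[q [q1 q2 h]]].
  have : 1 / 2 <= Lc.
    have : (1 / 2) * (2 * p) <= Lc * (2 * p) by rewrite hL; lra.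
    by rewrite ler_pM2r //; lra.
  lra.
set x := (1 - q) * cb m q b in h.
have hq : 0 <= q <= 1 by apply/andP; split; lra.
have x0 : 0 <= x by rewrite /x; apply: mulr_ge0; [lra | apply: cb_ge0].
have hx := pmf_bound m b P2 q1 q2; rewrite -/x in hx.
have xe : x < e.
  have mp : 0 <= m%:R * (1 - p) by apply: mulr_ge0; [rewrite ler0n | lra].
  have : x ^+ 2 < e ^+ 2.
    rewrite ltNge; apply/negP => h2.
    have : e ^+ 2 * (m%:R * (1 - p)) <= x ^+ 2 * (m%:R * (1 - p)) by apply: ler_wpM2r.
    lra.
  rewrite -ltr_sqrt ?exprn_gt0 // !sqrtr_sqr !ger0_norm //; exact: ltW.
set T := theta_of _ _ _ in h *.
nra.
Qed.

Lemma rho01 : 0 < rho p < 1.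
Proof.
have P1 : 1 / 2 < p by case/andP: hp.
have P2 : p < 1 by case/andP: hp.
rewrite /rho; apply/andP; split; nra.
Qed.

Lemma theta_low_bound m : (1 <= m)%N ->
  Lc - rho p ^+ m <= theta p ((m.+1)./2).+1 m.+1.
Proof.
move=> m1.
have P1 : 1 / 2 < p by case/andP: hp.
have P2 : p < 1 by case/andP: hp.
have hL := Lc_eq.
set b := (m.+1)./2.
have hodd := odd_double_half m.+1; rewrite -/b -muln2 in hodd.
have ho : (odd m.+1 <= 1)%N by case: (odd _).
have hb : (b <= m)%N by lia.
have h2b : (2 * b <= m.+1)%N by lia.
have hm2b : (m <= 2 * b)%N by lia.
have := theta_lower hp hb (eq_spec hb).
have := tail_lo (n := m.+1) hp h2b.
have := tail_up hp hm2b.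
have /andP[r0 r1] := rho01.
have rm0 : 0 <= rho p ^+ m by apply: exprn_ge0; lra.
have hr : rho p ^+ m.+1 <= rho p ^+ m by rewrite exprS; nra.
rewrite /theta; set T := theta_of _ _ _.
move=> h1 h2 h3.
have : 0 <= rho p ^+ m by apply: exprn_ge0; lra.
nra.
Qed.

End Main.

Theorem theorem2 (R : realType) (p : R) (hp : 1 / 2 < p < 1) :
  (fun n : nat => max_theta p n) @ \oo --> (3 * p - 1) / (2 * p) /\
  (3 * p - 1) / (2 * p) < 1.
Proof.
have P1 : 1 / 2 < p by case/andP: hp.
have P2 : p < 1 by case/andP: hp.
have p0 : 0 < 2 * p by lra.
split; last by rewrite ltr_pdivrMr // mul1r; lra.
have hL := Lc_eq hp; rewrite -/(Lc p).
have /andP[r0 r1] := rho01 hp.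
apply/cvgrPdist_lt => e e0.
have hr1 : `|rho p| < 1 by rewrite ger0_norm // ltW.
have hc := cvg_expr hr1.
have H1 := (cvgrPdist_lt _ _).1 hc (e * rho p) (mulr_gt0 e0 r0).
have H2 := nbhs_infty_gtr (8 / (e ^+ 2 * (1 - p)) + 1).
have H3 := nbhs_infty_ge 2.
near=> n.
have h1 : `|0 - rho p ^+ n| < e * rho p by near: n; exact: H1.
have h2 : 8 / (e ^+ 2 * (1 - p)) + 1 < n%:R by near: n; exact: H2.
have h3 : (2 <= n)%N by near: n; exact: H3.
have en : n = n.-1.+1 by rewrite prednK //; apply: leq_trans h3.
move: h1 h2; rewrite en; set m := n.-1 => h1 h2.
have m1 : (1 <= m)%N by rewrite /m -ltnS -en.
have lo := theta_low_bound hp m1.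
have e2p : 0 < e ^+ 2 * (1 - p) by apply: mulr_gt0; [apply: exprn_gt0 | lra].
have he : 8 < e ^+ 2 * (m%:R * (1 - p)).
  have : 8 / (e ^+ 2 * (1 - p)) < m%:R by rewrite -natr1 in h2; lra.
  rewrite ltr_pdivrMr // => h; rewrite mulrCA mulrC; lra.
have up : max_theta p m.+1 <= Lc p + e / 2.
  rewrite /max_theta big_seq; apply: bigmax_le.
    have : 0 < Lc p.
      have : 0 * (2 * p) < Lc p * (2 * p) by rewrite hL; lra.
      by rewrite ltr_pM2r.
    lra.
  move=> B; rewrite mem_index_iota => /andP[hB1 hB2].
  case: B hB1 hB2 => [|b] // _ hb.
  exact: theta_up_bound.
have low : theta p ((m.+1)./2).+1 m.+1 <= max_theta p m.+1.
  have hin : ((m.+1)./2).+1 \in index_iota 1 m.+2.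
    rewrite mem_index_iota; apply/andP; split => //; rewrite !ltnS; exact: half_le.
  rewrite /max_theta big_seq; exact: (le_bigmax_seq _ _ _ _ hin hin).
have rm : rho p ^+ m < e.
  move: h1; rewrite sub0r normrN ger0_norm; last by apply: exprn_ge0; exact: ltW.
  rewrite exprS mulrC => h1.
  by rewrite -(ltr_pM2r r0).
rewrite ltr_norml; apply/andP; split; lra.
Unshelve. all: by end_near.
Qed.
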